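(* Let $\theta_{12},\gamma_{12},\theta_{23},\gamma_{23}\in(0,1)$ and for $(i,j)\in\{(1,2),(2,3)\}$ let $g_{\{i,j\}}(x_i,x_j)=\frac{x_i}{\theta_{ij}}+\frac{x_j}{\gamma_{ij}}+\Big(1-\frac{1}{\theta_{ij}}-\frac{1}{\gamma_{ij}}\Big)\min(x_i,x_j)$ for $x_i,x_j\ge0$. Let $g(x_1,x_2,x_3)=g_{\{1,2\}}(x_1,x_2)+g_{\{2,3\}}(x_2,x_3)-x_2$ and $g_{\{1,3\}}(x_1,x_3):=\min_{x_2\ge0}g(x_1,x_2,x_3)$. Then for all $x_1,x_3\ge0$, $$g_{\{1,3\}}(x_1,x_3)=\frac{x_1}{\max(\theta_{12},\theta_{23})}+\frac{x_3}{\max(\gamma_{12},\gamma_{23})}+\Big(1-\frac{1}{\max(\theta_{12},\theta_{23})}-\frac{1}{\max(\gamma_{12},\gamma_{23})}\Big)\min(x_1,x_3).$$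
   Context: This is the chain geometric extremal graphical model on vertices $\{1,2,3\}$ with edges $\{1,2\},\{2,3\}$ in standard exponential margins; $g_{\{1,3\}}$ is its bivariate marginal gauge. *)

(* Defs.v *)
From HB Require Import structures.
From mathcomp Require Import all_boot all_order all_algebra.
Set Implicit Arguments. Unset Strict Implicit. Unset Printing Implicit Defensive.
Import Order.TTheory GRing.Theory Num.Theory.
Local Open Scope ring_scope.

Definition gbiv (R : realFieldType) (th ga xi xj : R) : R :=
  xi / th + xj / ga + (1 - th^-1 - ga^-1) * Num.min xi xj.

Definition gchain (R : realFieldType) (th12 ga12 th23 ga23 x1 x2 x3 : R) : R :=
  gbiv th12 ga12 x1 x2 + gbiv th23 ga23 x2 x3 - x2.

Definition is_min_nonneg (R : realFieldType) (f : R -> R) (m : R) : Prop :=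
  (exists2 x2 : R, 0 <= x2 & f x2 = m) /\ (forall x2 : R, 0 <= x2 -> m <= f x2).

(* Main.v *)
Require Import Defs.
From mathcomp Require Import all_boot all_order all_algebra.
From mathcomp Require Import ring lra.
Import Order.TTheory GRing.Theory Num.Theory.
Local Open Scope ring_scope.

Lemma invmax (R : realFieldType) (x y : R) : 0 < x -> 0 < y ->
  (Num.max x y)^-1 = Num.min x^-1 y^-1.
Proof.
move=> hx hy; case: (leP x y) => H.
  by rewrite min_r // lef_pV2 // posrE.
by rewrite min_l // lef_pV2 ?posrE // ltW.
Qed.

Lemma ge1inv (R : realFieldType) (x : R) : 0 < x < 1 -> 1 <= x^-1.
Proof. by case/andP=> h0 h1; rewrite invf_ge1 // ltW. Qed.

Lemma att (R : realFieldType) (a b c d x1 x3 : R) :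
  1 <= a -> 1 <= b -> 1 <= c -> 1 <= d -> 0 <= x1 -> 0 <= x3 ->
  exists2 y, 0 <= y &
  x1 * a + y * b + (1 - a - b) * Num.min x1 y + (y * c + x3 * d + (1 - c - d) * Num.min y x3) - y =
  x1 * Num.min a c + x3 * Num.min b d + (1 - Num.min a c - Num.min b d) * Num.min x1 x3.
Proof.
move=> ha hb hc hd h1 h3.
case: (leP x1 x3) => H3.
  case: (leP b d) => H2.
    exists x3 => //; rewrite (minEle x3 x3) lexx (minEle x1 x3) H3.
    case: (leP a c) => H1; ring.
  exists x1 => //; rewrite (minEle x1 x1) lexx (minEle x1 x3) H3.
  case: (leP a c) => H1; ring.
case: (leP a c) => H1.
  exists x3 => //; rewrite (minEle x3 x3) lexx (minEle x1 x3) leNgt H3 /=.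
  case: (leP b d) => H2; ring.
exists x1 => //; rewrite (minEle x1 x1) lexx (minEle x1 x3) leNgt H3 /=.
case: (leP b d) => H2; ring.
Qed.
Lemma key (R : realFieldType) (a b c d x1 x3 y : R) :
  1 <= a -> 1 <= b -> 1 <= c -> 1 <= d -> 0 <= x1 -> 0 <= x3 -> 0 <= y ->
  x1 * Num.min a c + x3 * Num.min b d + (1 - Num.min a c - Num.min b d) * Num.min x1 x3
  <= x1 * a + y * b + (1 - a - b) * Num.min x1 y + (y * c + x3 * d + (1 - c - d) * Num.min y x3) - y.
Proof.
move=> ha hb hc hd h1 h3 hy.
case: (leP a c) => H1; case: (leP b d) => H2; case: (leP x1 x3) => H3;
case: (leP x1 y) => H4; case: (leP y x3) => H5; nra.
Qed.

Theorem lemma1 (R : realFieldType) (th12 ga12 th23 ga23 : R) :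
  0 < th12 < 1 -> 0 < ga12 < 1 -> 0 < th23 < 1 -> 0 < ga23 < 1 ->
  forall x1 x3 : R, 0 <= x1 -> 0 <= x3 ->
  is_min_nonneg (fun x2 => gchain th12 ga12 th23 ga23 x1 x2 x3)
    (gbiv (Num.max th12 th23) (Num.max ga12 ga23) x1 x3).
Proof.
move=> h12 g12 h23 g23 x1 x3 hx1 hx3.
have Ea := @ge1inv _ _ h12; have Eb := @ge1inv _ _ g12; have Ec := @ge1inv _ _ h23; have Ed := @ge1inv _ _ g23.
have P1 : 0 < th12 by case/andP: h12.
have P2 : 0 < ga12 by case/andP: g12.
have P3 : 0 < th23 by case/andP: h23.
have P4 : 0 < ga23 by case/andP: g23.
rewrite /is_min_nonneg /gchain /gbiv !(@invmax R) //.
split.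
  have [y hy E] := @att _ _ _ _ _ _ _ Ea Eb Ec Ed hx1 hx3.
  by exists y.
move=> y hy; exact: key.
Qed.
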